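(* In the setting below, with probability at least $1-\delta$ the following holds: for any pair of observations $j,j'$ clustered together in $\widehat{\mathcal S}$, there exists a hidden state $i$ such that $j,j'\in\mathcal Y_i$. Finally, $\widehat{\mathcal S}\to\mathcal S$ as $N$ tends to infinity.
   Context: A rich-observation MDP (ROMDP) consists of finite sets of hidden states $\mathcal X=[X]$, observations $\mathcal Y=[Y]$, actions $\mathcal A=[A]$ with $X\le Y$; transitions $T_{i',i,l}=\mathbb P(x'=i'\mid x=i,a=l)$; observation matrix $O_{j,i}=\mathbb P(y=j\mid x=i)$ with each observation $j$ having exactly one hidden state with $O_{j,i}>0$, and $\mathcal Y_i=\{j:O_{j,i}>0\}$; rewards in $[0,1]$ depending on hidden state and action. Assumption 1: for every deterministic policy $\pi:\mathcal Y\to\mathcal A$ the induced Markov chain on hidden states is ergodic. Assumption 2: each $T_{\cdot,\cdot,l}$ is full rank. For a policy $\pi$: $\omega_\pi^{(l)}(i)=\mathbb P_\pi(x=i\mid a=l)$ under stationarity, $\mathcal X_\pi^{(l)}=\{i:\omega_\pi^{(l)}(i)>0\}$; $[V_2^{(l)}]_{j,i}=\mathbb P(y_t=j\mid x_t=i,a_t=l)$ for $i\in\mathcal X_\pi^{(l)}$ (stationary process). A trajectory of $N$ steps is generated by $\pi$; $N(l)$ is the number of steps where action $l$ is taken; $\widehat V_2^{(l)}$ is the spectral (tensor-decomposition) estimate of $V_2^{(l)}$ from this trajectory, which satisfies, with probability at least $1-\delta$ for all $l$ and $i\in\mathcal X_\pi^{(l)}$ once $N(l)$ exceeds a threshold,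 $\|[V_2^{(l)}]_{\cdot,i}-[\widehat V_2^{(l)}]_{\cdot,i}\|_2\le\mathcal B_O^{(l)}:=C_2\sqrt{\log(2Y^{3/2}/\delta)/N(l)}$ with a problem-dependent constant $C_2$. Define the binary matrix $[\widetilde V_2^{(l)}]_{j,i}=1$ if $[\widehat V_2^{(l)}]_{j,i}\ge\mathcal B_O^{(l)}$ and $0$ otherwise; clusters $\widehat{\mathcal Y}_i^{(l)}=\{j:[\widetilde V_2^{(l)}]_{j,i}>0\}$; $\widehat{\mathcal Y}^{\mathsf c}=\mathcal Y\setminus\bigcup_{i,l}\widehat{\mathcal Y}_i^{(l)}$; $\widehat{\mathcal S}$ consists of the clusters $\widehat{\mathcal Y}_i^{(l)}$ and the singletons of $\widehat{\mathcal Y}^{\mathsf c}$. The limiting space $\mathcal S$ consists of the clusters $\{j:[V_2^{(l)}]_{j,i}>0\}$ ($l\in\mathcal A$, $i\in\mathcal X_\pi^{(l)}$) and the singletons of observations in none of them. *)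

(* Defs.v *)
From HB Require Import structures.
From mathcomp Require Import all_boot all_order all_algebra.
From mathcomp Require Import reals exp.
Set Implicit Arguments. Unset Strict Implicit. Unset Printing Implicit Defensive.
Import Order.TTheory GRing.Theory Num.Theory.
Local Open Scope ring_scope.

(* Conventions: hidden states 'I_nX, observations 'I_nY, actions 'I_nA.
   T l : 'M_nX with (T l) i' i = P(x' = i' | x = i, a = l).
   O : 'M_(nY, nX) with O j i = P(y = j | x = i).                        *)

Section ROMDP.
Variable R : realType.

Definition colstoch m n (M : 'M[R]_(m, n)) : Prop :=
  (forall i j, 0 <= M i j) /\ (forall j, \sum_i M i j = 1).

Definition distribution n (p : 'I_n -> R) : Prop :=
  (forall i, 0 <= p i) /\ \sum_i p i = 1.

Definition induced_chain nX nY nA (O : 'M[R]_(nY, nX)) (T : 'I_nA -> 'M[R]_nX)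
  (p : 'I_nY -> 'I_nA) : 'M[R]_nX :=
  \matrix_(i', i) \sum_j O j i * T (p j) i' i.

Definition mxpow n (M : 'M[R]_n) (k : nat) : 'M[R]_n := iter k (mulmx M) 1%:M.

(* k-step transition probability from i to i' is (mxpow M k) i' i *)
Definition irreducible_chain n (M : 'M[R]_n) : Prop :=
  forall i i', exists k, 0 < mxpow M k i' i.

Definition aperiodic_chain n (M : 'M[R]_n) : Prop :=
  forall i (d : nat),
    (forall k, (0 < k)%N -> 0 < mxpow M k i i -> (d %| k)%N) -> d = 1%N.

Definition ergodic_chain n (M : 'M[R]_n) : Prop :=
  irreducible_chain M /\ aperiodic_chain M.

Definition stationary n (M : 'M[R]_n) (rho : 'I_n -> R) : Prop :=
  distribution rho /\ forall i', \sum_i M i' i * rho i = rho i'.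

Section Policy.
Variables (nX nY nA : nat) (O : 'M[R]_(nY, nX)) (pi : 'I_nY -> 'I_nA)
          (rho : 'I_nX -> R).

(* stationary joint law P(x = i, y = j, a = l) under policy pi *)
Definition joint (i : 'I_nX) (j : 'I_nY) (l : 'I_nA) : R :=
  rho i * O j i * (pi j == l)%:R.

(* omega_pi^(l)(i) = P(x = i | a = l) *)
Definition omega (l : 'I_nA) (i : 'I_nX) : R :=
  (\sum_j joint i j l) / (\sum_i0 \sum_j joint i0 j l).

Definition Xpi (l : 'I_nA) : {set 'I_nX} := [set i | 0 < omega l i].

(* [V_2^(l)]_{j,i} = P(y = j | x = i, a = l) *)
Definition V2 (l : 'I_nA) : 'M[R]_(nY, nX) :=
  \matrix_(j, i) (joint i j l / \sum_j0 joint i j0 l).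

End Policy.

Definition Ycl nX nY (O : 'M[R]_(nY, nX)) (i : 'I_nX) : {set 'I_nY} :=
  [set j | 0 < O j i].

Definition colnorm m (v : 'I_m -> R) : R := Num.sqrt (\sum_j v j ^+ 2).

Definition BO (C2 : R) (nY : nat) (delta : R) (Nl : nat) : R :=
  C2 * Num.sqrt (ln (2 * (nY%:R `^ (3%:R / 2%:R)) / delta) / Nl%:R).

Definition Vtilde nX nY (Vh : 'M[R]_(nY, nX)) (b : R) : 'M[R]_(nY, nX) :=
  \matrix_(j, i) (if b <= Vh j i then 1 else 0).

Definition cluster_space nX nY nA (Xs : 'I_nA -> {set 'I_nX})
  (clus : 'I_nA -> 'I_nX -> {set 'I_nY}) : {set {set 'I_nY}} :=
  [set clus l i | l in 'I_nA, i in Xs l] :|: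
  [set [set j] | j in ~: (\bigcup_(l : 'I_nA) \bigcup_(i in Xs l) clus l i)].

Definition Shat nX nY nA (Xs : 'I_nA -> {set 'I_nX})
  (Vh : 'I_nA -> 'M[R]_(nY, nX)) (b : 'I_nA -> R) : {set {set 'I_nY}} :=
  cluster_space Xs (fun l i => [set j | 0 < Vtilde (Vh l) (b l) j i]).

Definition Slim nX nY nA (Xs : 'I_nA -> {set 'I_nX})
  (V : 'I_nA -> 'M[R]_(nY, nX)) : {set {set 'I_nY}} :=
  cluster_space Xs (fun l i => [set j | 0 < V l j i]).

(* trajectories of N steps: (x_t, y_t), with a_t = pi y_t *)
Definition traj (nX nY N : nat) := (N.-tuple ('I_nX * 'I_nY))%type.

Section Traj.
Variables (nX nY nA : nat) (O : 'M[R]_(nY, nX)) (T : 'I_nA -> 'M[R]_nX)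
          (pi : 'I_nY -> 'I_nA) (mu : 'I_nX -> R).

Fixpoint chainP (prev : 'I_nX * 'I_nY) (s : seq ('I_nX * 'I_nY)) : R :=
  match s with
  | [::] => 1
  | q :: s' => T (pi prev.2) q.1 prev.1 * O q.2 q.1 * chainP q s'
  end.

Definition pathP (s : seq ('I_nX * 'I_nY)) : R :=
  match s with
  | [::] => 1
  | p :: s' => mu p.1 * O p.2 p.1 * chainP p s'
  end.

Definition Pr (N : nat) (E : pred (traj nX nY N)) : R :=
  \sum_(tau : traj nX nY N | E tau) pathP tau.

Definition Ncount (l : 'I_nA) (s : seq ('I_nX * 'I_nY)) : nat :=
  count (fun p => pi p.2 == l) s.
End Traj.

Definition consistent nX nY (O : 'M[R]_(nY, nX)) (S : {set {set 'I_nY}}) : bool :=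
  [forall C in S, forall j in C, forall j' in C,
     exists i, (j \in Ycl O i) && (j' \in Ycl O i)].

End ROMDP.

(* Main.v *)
Require Import Defs.
From HB Require Import structures.
From mathcomp Require Import all_boot all_order all_algebra.
From mathcomp Require Import reals exp.
From mathcomp Require Import ring lra.
Import Order.TTheory GRing.Theory Num.Theory.
Local Open Scope ring_scope.
Set Implicit Arguments. Unset Strict Implicit. Unset Printing Implicit Defensive.

Lemma big_tupleS (R : realType) (P : finType) n (f : n.+1.-tuple P -> R) :
  \sum_(t : n.+1.-tuple P) f t = \sum_(q : P) \sum_(t : n.-tuple P) f [tuple of q :: t].
Proof.
rewrite pair_big /=.
rewrite (reindex (fun qt : P * n.-tuple P => [tuple of qt.1 :: qt.2])) //=.
exists (fun t : n.+1.-tuple P => (thead t, [tuple of behead t])).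
  by move=> [q t] _ /=; congr pair; apply/val_inj.
move=> t _; apply/val_inj => /=. by case: t => [[|a s] //=].
Qed.

Lemma big_tuple0 (R : realType) (P : finType) (f : 0.-tuple P -> R) :
  \sum_(t : 0.-tuple P) f t = f [tuple].
Proof.
rewrite (big_pred1 [tuple]) // => t /=; apply/esym/eqP/val_inj.
by case: t => [[]].
Qed.

Section Hit.
Variables (R : realType) (nX nY nA : nat) (O : 'M[R]_(nY, nX)) (T : 'I_nA -> 'M[R]_nX) (pi : 'I_nY -> 'I_nA) (l : 'I_nA).
Hypothesis hT : forall l, colstoch (T l).
Hypothesis hO : colstoch O.
Local Notation P := ('I_nX * 'I_nY)%type.

Definition W (p q : P) : R := T (pi p.2) q.1 p.1 * O q.2 q.1.
Lemma W_ge0 p q : 0 <= W p q.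
Proof. by rewrite /W mulr_ge0 //; [case: (hT (pi p.2)) | case: hO]. Qed.

Lemma sumW p : \sum_q W p q = 1.
Proof.
rewrite -(pair_bigA _ (fun x j => W p (x, j))) /=.
rewrite -(proj2 (hT (pi p.2)) p.1); apply: eq_bigr => x _.
by rewrite /W /= -mulr_sumr (proj2 hO) mulr1.
Qed.

Definition hit (q : P) : bool := pi q.2 == l.
Fixpoint H (M : nat) (p : P) : R :=
  if M is M'.+1 then \sum_(q | ~~ hit q) W p q * H M' q else 1.
Definition F n k (p : P) : R :=
  \sum_(t : n.-tuple P) chainP O T pi p t * (count hit t < k)%:R.

Lemma chainP_ge0 s p : 0 <= chainP O T pi p s.
Proof.
elim: s p => [|q s IH] p /=; first exact: ler01.
by rewrite mulr_ge0 // (W_ge0 p q).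
Qed.

Lemma F_rec n k p : F n.+1 k p = \sum_q W p q * F n (k - hit q) q.
Proof.
rewrite /F big_tupleS; apply: eq_bigr => q _; rewrite mulr_sumr.
by apply: eq_bigr => t _ /=; rewrite ltn_subRL mulrA.
Qed.

Lemma F_ge0 n k p : 0 <= F n k p.
Proof. by apply: sumr_ge0 => t _; rewrite mulr_ge0 ?chainP_ge0. Qed.

Lemma F_le1 n k p : F n k p <= 1.
Proof.
elim: n k p => [|n IH] k p.
  by rewrite /F big_tuple0 /= mul1r; case: (0 < k)%N.
rewrite F_rec -(sumW p); apply: ler_sum => q _.
by rewrite ler_piMr ?W_ge0.
Qed.

Lemma F_monoK n k1 k2 p : (k1 <= k2)%N -> F n k1 p <= F n k2 p.
Proof.
move=> hk; apply: ler_sum => t _; apply: ler_wpM2l; first exact: chainP_ge0.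
case: ltnP => h1; last by case: (_ < k2)%N.
by rewrite (leq_trans h1 hk).
Qed.

Lemma F_monoN B n k : (forall q, F n k q <= B) -> forall q, F n.+1 k q <= B.
Proof.
move=> hB p; rewrite F_rec.
apply: (@le_trans _ _ (\sum_q W p q * B)).
  apply: ler_sum => q _; apply: ler_wpM2l; first exact: W_ge0.
  by apply: le_trans (hB q); apply: F_monoK; rewrite leq_subr.
by rewrite -mulr_suml sumW mul1r.
Qed.

Lemma F_monoN_iter B n k : (forall q, F n k q <= B) -> forall m q, F (m + n) k q <= B.
Proof. by move=> hB; elim=> [|m IH] //=; apply: F_monoN. Qed.

Lemma H_ge0 M p : 0 <= H M p.
Proof.
elim: M p => [|M IH] p /=; first exact: ler01.
by apply: sumr_ge0 => q _; rewrite mulr_ge0 ?W_ge0.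
Qed.

Lemma H_le1 M p : H M p <= 1.
Proof.
elim: M p => [|M IH] p //=.
rewrite -(sumW p) [X in _ <= X](bigID hit) /= -[X in X <= _]add0r.
apply: lerD; first by apply: sumr_ge0 => q _; exact: W_ge0.
by apply: ler_sum => q _; rewrite ler_piMr ?W_ge0.
Qed.

Lemma H_monoS M p : H M.+1 p <= H M p.
Proof.
elim: M p => [|M IH] p; first exact: H_le1.
rewrite [H M.+2 p]/= [H M.+1 p]/=; apply: ler_sum => q _.
by apply: ler_wpM2l; [exact: W_ge0 | exact: IH].
Qed.

Lemma H_mono M M' p : (M <= M')%N -> H M' p <= H M p.
Proof.
move/subnK <-; elim: (M' - M)%N => [|d IH] //=.
by apply: le_trans IH; exact: H_monoS.
Qed.

Lemma key n k A B : (forall q, F n k.+1 q <= A) -> (forall q, F n k q <= B) ->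
  forall M p, F (M + n) k.+1 p <= H M p * A + (1 - H M p) * B.
Proof.
move=> hA hB; elim=> [|M IH] p.
  by rewrite /= mul1r subrr mul0r addr0.
rewrite addSn F_rec (bigID hit) /=.
apply: (@le_trans _ _ (\sum_(q | hit q) W p q * B +
   \sum_(q | ~~ hit q) W p q * (H M q * A + (1 - H M q) * B))).
  apply: lerD; apply: ler_sum => q hq; apply: ler_wpM2l; try exact: W_ge0.
    by rewrite hq subn1 /=; apply: F_monoN_iter.
  by rewrite (negbTE hq) subn0; exact: IH.
have hs := sumW p; rewrite (bigID hit) /= in hs.
rewrite -mulr_suml.
have -> : \sum_(q | ~~ hit q) W p q * (H M q * A + (1 - H M q) * B) =
  (\sum_(q | ~~ hit q) W p q * H M q) * A + (\sum_(q | ~~ hit q) W p q) * B -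
  (\sum_(q | ~~ hit q) W p q * H M q) * B.
  rewrite !mulr_suml -big_split -sumrB /=; apply: eq_bigr => q _.
  by ring.
rewrite /=.
set a := \sum_(q | hit q) W p q.
set b := \sum_(q | ~~ hit q) W p q.
set c := \sum_(q | ~~ hit q) W p q * H M q.
have -> : b = 1 - a by rewrite -hs addrC addrK.
rewrite le_eqVlt; apply/orP; left; apply/eqP.
ring.
Qed.


Lemma mxpowSr n (M : 'M[R]_n) k : mxpow M k.+1 = mxpow M k *m M.
Proof.
rewrite /mxpow /=; elim: k => [|k IH] /=; first by rewrite mulmx1 mul1mx.
by rewrite -mulmxA -IH.
Qed.

Lemma colstoch_le1 m n (M : 'M[R]_(m, n)) i j : colstoch M -> M i j <= 1.
Proof.
case=> h0 h1; rewrite -(h1 j) (bigD1 i) //= lerDl.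
by apply: sumr_ge0 => k _.
Qed.

Lemma colstoch_mul m n p (A : 'M[R]_(m, n)) (B : 'M[R]_(n, p)) :
  colstoch A -> colstoch B -> colstoch (A *m B).
Proof.
case=> hA0 hA1 [hB0 hB1]; split.
  by move=> i j; rewrite mxE; apply: sumr_ge0 => k _; rewrite mulr_ge0.
move=> j; under eq_bigr do rewrite mxE.
rewrite exchange_big /= -(hB1 j); apply: eq_bigr => k _.
by rewrite -mulr_suml hA1 mul1r.
Qed.

Lemma colstoch1 n : colstoch (1%:M : 'M[R]_n).
Proof.
split; first by move=> i j; rewrite mxE ler0n.
move=> j; rewrite (bigD1 j) //= big1 ?addr0; first by rewrite mxE eqxx.
by move=> i hi; rewrite mxE (negbTE hi).
Qed.

Lemma colstoch_pow n (M : 'M[R]_n) k : colstoch M -> colstoch (mxpow M k).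
Proof.
move=> hM; elim: k => [|k IH]; first exact: colstoch1.
by rewrite mxpowSr; apply: colstoch_mul.
Qed.

Local Notation Ind := (induced_chain O T pi).
Lemma T_ge0 a i j : 0 <= T a i j. Proof. by case: (hT a). Qed.
Lemma O_ge0 i j : 0 <= O i j. Proof. by case: hO. Qed.

Lemma colstoch_Ind : colstoch Ind.
Proof.
split.
  move=> i j; rewrite mxE; apply: sumr_ge0 => k _; rewrite mulr_ge0 //.
    by case: hO.
  by case: (hT (pi k)).
move=> i; under eq_bigr do rewrite mxE.
rewrite exchange_big /= -(proj2 hO i); apply: eq_bigr => j _.
by rewrite -mulr_sumr (proj2 (hT (pi j)) i) mulr1.
Qed.

Lemma reach i0 j0 : hit (i0, j0) -> forall m p,
  O j0 i0 * \sum_x T (pi p.2) x p.1 * mxpow Ind m i0 x <= 1 - H m.+1 p.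
Proof.
move=> hh; elim=> [|m IH] p.
  have -> : \sum_x T (pi p.2) x p.1 * mxpow Ind 0 i0 x = T (pi p.2) i0 p.1.
    rewrite (bigD1 i0) //= big1 ?addr0; first by rewrite /mxpow /= mxE eqxx mulr1.
    by move=> x hx; rewrite /mxpow /= mxE eq_sym (negbTE hx) mulr0.
  have hs := sumW p; rewrite (bigID hit) /= in hs.
  rewrite /=; under eq_bigr do rewrite mulr1.
  rewrite -hs addrK (bigD1 (i0, j0)) //= -[X in X <= _]addr0 mulrC.
  by apply: lerD => //; apply: sumr_ge0 => q _; exact: W_ge0.
set c := O j0 i0.
set S := fun q : P => \sum_x T (pi q.2) x q.1 * mxpow Ind m i0 x.
have hc0 : 0 <= c by apply: O_ge0.
have hc1 : c <= 1 by apply: colstoch_le1.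
have hS q : c * S q <= 1.
  rewrite -(mul1r 1) ler_pM //; first by apply: sumr_ge0 => x _; rewrite mulr_ge0 ?T_ge0 //;
     case: (colstoch_pow m colstoch_Ind).
  rewrite -(proj2 (hT (pi q.2)) q.1); apply: ler_sum => x _.
  rewrite ler_piMr ?T_ge0 //.
  exact: colstoch_le1 (colstoch_pow m colstoch_Ind).
have -> : 1 - H m.+2 p = \sum_(q | hit q) W p q * 1 + \sum_(q | ~~ hit q) W p q * (1 - H m.+1 q).
  have hs := sumW p; rewrite (bigID hit) /= in hs.
  rewrite -[in LHS]hs /=.
  under [X in _ = X + _]eq_bigr do rewrite mulr1.
  under [X in _ = _ + X]eq_bigr do rewrite mulrBr mulr1.
  by rewrite sumrB addrA.
apply: (@le_trans _ _ (\sum_q W p q * (c * S q))); last first.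
  rewrite (bigID hit) /=; apply: lerD; apply: ler_sum => q hq; apply: ler_wpM2l;
    try exact: W_ge0; first exact: hS.
  exact: IH.
rewrite le_eqVlt; apply/orP; left; apply/eqP.
rewrite -(pair_bigA _ (fun x j => W p (x,j) * (c * S (x,j)))) /=.
rewrite mulr_sumr; apply: eq_bigr => x' _.
have -> : Ind *m mxpow Ind m = mxpow Ind m *m Ind by rewrite -mxpowSr.
rewrite mxE.
rewrite [X in c * (_ * X)](eq_bigr (fun x => \sum_j mxpow Ind m i0 x * (O j x' * T (pi j) x x'))); last by move=> x _; rewrite mxE mulr_sumr.
rewrite exchange_big /= !mulr_sumr; apply: eq_bigr => j _.
rewrite /S /W /= !mulr_sumr; apply: eq_bigr => x _.
ring.
Qed.

End Hit.

Lemma fin_max (I : finType) (Q : I -> nat -> Prop) :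
  (forall i, exists n0, forall n, (n0 <= n)%N -> Q i n) ->
  exists n0, forall i n, (n0 <= n)%N -> Q i n.
Proof.
move=> h.
suff [n0 hn0] : exists n0, forall i, i \in enum I -> forall n, (n0 <= n)%N -> Q i n.
  by exists n0 => i n hn; apply: hn0 => //; rewrite mem_enum.
elim: (enum I) => [|a s [n1 h1]]; first by exists 0%N.
have [n2 h2] := h a; exists (maxn n1 n2) => i; rewrite inE => /orP [/eqP -> | hi] n hn.
  by apply: h2; apply: leq_trans hn; apply: leq_maxr.
by apply: h1 => //; apply: leq_trans hn; apply: leq_maxl.
Qed.

Lemma fin_min (R : realType) (I : finType) (f : I -> R) :
  (forall i, 0 < f i) -> exists c, [/\ 0 < c, c <= 1 & forall i, c <= f i].
Proof.
move=> h.
suff [c [c0 c1 hc]] : exists c, [/\ 0 < c, c <= 1 & forall i, i \in enum I -> c <= f i].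
  by exists c; split => // i; apply: hc; rewrite mem_enum.
elim: (enum I) => [|a s [c [c0 c1 hc]]]; first by exists 1; split.
exists (Num.min c (f a)); split.
- by rewrite lt_min c0 h.
- by rewrite ge_min c1.
- move=> i; rewrite inE => /orP [/eqP -> | hi]; first by rewrite ge_min lexx orbT.
  by rewrite ge_min hc.
Qed.

Lemma pow_small (R : realType) (h : R) : 0 <= h -> h < 1 ->
  forall e, 0 < e -> exists j, h ^+ j <= e.
Proof.
move=> h0 h1 e e0.
set d := 1 - h.
have d0 : 0 < d by rewrite /d subr_gt0.
have bern : forall j : nat, h ^+ j * (1 + j%:R * d) <= 1.
  elim => [|j IH]; first by rewrite expr0 mul1r mul0r addr0.
  have hj0 : 0 <= h ^+ j by rewrite exprn_ge0.
  have hj1 : h ^+ j <= 1 by apply: exprn_ile1 => //; apply: ltW.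
  rewrite exprS -natr1.
  have : h * (h ^+ j * (1 + j%:R * d)) <= h by rewrite ler_piMr.
  have : h * h ^+ j * d <= d by apply: ler_piMl; [apply: ltW | rewrite -exprS; apply: exprn_ile1 => //; apply: ltW].
  rewrite /d; nra.
have jd : 0 <= (e * d)^-1 by rewrite invr_ge0 ltW // mulr_gt0.
exists (Num.Def.archi_bound (e * d)^-1).
set j := Num.Def.archi_bound _.
have hj : (e * d)^-1 < j%:R by apply: archi_boundP.
have := bern j.
have hj0 : 0 <= h ^+ j by rewrite exprn_ge0.
have : 1 < j%:R * d * e.
  have ed0 : 0 < e * d by rewrite mulr_gt0.
  have : (e*d)^-1 * (e*d) < j%:R * (e*d) by rewrite ltr_pM2r.
  by rewrite mulVf ?gt_eqF // -mulrA [d * e]mulrC.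
move=> H1 H2.
have H3 : h ^+ j * (j%:R * d * e) <= e by nra.
nra.
Qed.

Section Conv.
Variables (R : realType) (nX nY nA : nat) (O : 'M[R]_(nY, nX)) (T : 'I_nA -> 'M[R]_nX) (pi : 'I_nY -> 'I_nA) (l : 'I_nA).
Hypothesis hT : forall l, colstoch (T l).
Hypothesis hO : colstoch O.
Local Notation P := ('I_nX * 'I_nY)%type.

Lemma conv (M : nat) (h : R) : 0 <= h -> h < 1 -> (forall p, H O T pi l M p <= h) ->
  forall k e, 0 < e -> exists n0, forall n, (n0 <= n)%N -> forall q, F O T pi l n k q <= e.
Proof.
move=> h0 h1 hH; elim=> [|k IH] e e0.
  exists 0%N => n _ q; rewrite /F big1 ?ltW // => t _.
  by rewrite ltn0 mulr0.
have e20 : 0 < e / 2 by rewrite divr_gt0.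
have [n1 hn1] := IH _ e20.
have [j hj] := pow_small h0 h1 e20.
have step : forall j', forall q, F O T pi l (j' * M + n1) k.+1 q <= h ^+ j' + e / 2.
  elim=> [|j' IHj] q.
    rewrite mul0n add0n; apply: le_trans (F_le1 pi l hT hO _ _ _) _.
    by rewrite expr0 lerDl ltW.
  rewrite mulSn -addnA.
  have hB : forall q, F O T pi l (j' * M + n1) k q <= e / 2.
    by apply: hn1; rewrite leq_addl.
  apply: le_trans (key hT hO IHj hB M q) _.
  have Hq0 := H_ge0 pi l hT hO M q.
  have Hqh := hH q.
  have hj0 : 0 <= h ^+ j' by rewrite exprn_ge0.
  rewrite exprS; nra.
exists (j * M + n1)%N => n hn q.
rewrite -(subnK hn).
apply: le_trans (F_monoN_iter hT hO (step j) _ q) _.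
lra.
Qed.

Lemma H_unif : irreducible_chain (induced_chain O T pi) -> forall i0 j0,
  hit pi l (i0, j0) -> 0 < O j0 i0 ->
  exists M h, [/\ 0 <= h, h < 1 & forall p, H O T pi l M p <= h].
Proof.
move=> hirr i0 j0 hh hc.
have each : forall p : P, exists M0, forall M, (M0 <= M)%N -> H O T pi l M p < 1.
  move=> p.
  case: (pickP (fun x => 0 < T (pi p.2) x p.1)) => [x hx | hnone]; last first.
    have := proj2 (hT (pi p.2)) p.1; rewrite big1 => [/eqP|x _].
      by rewrite eq_sym oner_eq0.
    by apply/eqP; rewrite eq_le T_ge0 // andbT leNgt hnone.
  have [k hk] := hirr x i0.
  exists k.+1 => M hM; apply: le_lt_trans (H_mono pi l hT hO p hM) _.
  have := reach hT hO hh k p.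
  have : 0 < O j0 i0 * \sum_x0 T (pi p.2) x0 p.1 * mxpow (induced_chain O T pi) k i0 x0.
    rewrite mulr_gt0 // (bigD1 x) //= ltr_pwDl ?mulr_gt0 //.
    apply: sumr_ge0 => y _; rewrite mulr_ge0 ?T_ge0 //.
    by case: (colstoch_pow k (colstoch_Ind pi hT hO)).
  move=> h1 h2; lra.
have [M hM] := fin_max each.
have [c [c0 c1 hc']] := fin_min (f := fun p => 1 - H O T pi l M p)
   (fun p => (ltac:(rewrite subr_gt0; exact: hM))).
exists M, (1 - c); split; [lra | lra |] => p.
by have := hc' p; lra.
Qed.
End Conv.

Section Prob.
Variables (R : realType) (nX nY nA : nat) (O : 'M[R]_(nY, nX)) (T : 'I_nA -> 'M[R]_nX) (pi : 'I_nY -> 'I_nA) (mu : 'I_nX -> R).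
Hypothesis hT : forall l, colstoch (T l).
Hypothesis hO : colstoch O.
Hypothesis hmu : distribution mu.
Local Notation P := ('I_nX * 'I_nY)%type.

Lemma pathP_ge0 (s : seq P) : 0 <= Defs.pathP O T pi mu s.
Proof.
case: s => [|p s] /=; first exact: ler01.
by rewrite !mulr_ge0 ?(chainP_ge0 pi hT hO) ?(O_ge0 hO) //; case: hmu.
Qed.

Lemma Pr_mono N (E1 E2 : pred (traj nX nY N)) :
  (forall t, E1 t -> E2 t) -> Pr O T pi mu E1 <= Pr O T pi mu E2.
Proof.
move=> h; rewrite /Pr [X in X <= _]big_mkcond [X in _ <= X]big_mkcond /=.
apply: ler_sum => t _; case: ifP => h1; first by rewrite (h t h1).
by case: ifP => // _; exact: pathP_ge0.
Qed.

Lemma Pr_and N (E1 E2 : pred (traj nX nY N)) :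
  Pr O T pi mu E1 - Pr O T pi mu (fun t => ~~ E2 t) <= Pr O T pi mu (fun t => E1 t && E2 t).
Proof.
rewrite lerBlDr /Pr [X in X <= _]big_mkcond [X in _ <= X + _]big_mkcond [X in _ <= _ + X]big_mkcond -big_split /=.
apply: ler_sum => t _; have := pathP_ge0 t.
by case: (E1 t); case: (E2 t) => /= h; lra.
Qed.

Lemma Pr_union N (I : finType) (E : I -> pred (traj nX nY N)) :
  Pr O T pi mu (fun t => [exists i, E i t]) <= \sum_i Pr O T pi mu (E i).
Proof.
rewrite /Pr big_mkcond /=.
under [X in _ <= X]eq_bigr do rewrite big_mkcond.
rewrite [X in _ <= X]exchange_big /=; apply: ler_sum => t _.
case: existsP => [[i hi] | _]; last by apply: sumr_ge0 => i _; case: ifP => // _; exact: pathP_ge0.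
rewrite (bigD1 i) //= hi lerDl; apply: sumr_ge0 => j _.
by case: ifP => // _; exact: pathP_ge0.
Qed.

Lemma sum_muO : \sum_(q : P) mu q.1 * O q.2 q.1 = 1.
Proof.
rewrite -(pair_bigA _ (fun x j => mu x * O j x)) /= -(proj2 hmu).
by apply: eq_bigr => x _; rewrite -mulr_sumr (proj2 hO) mulr1.
Qed.

Lemma Pr_count (l : 'I_nA) n K e : (forall q, F O T pi l n K q <= e) ->
  Pr O T pi mu (fun t : traj nX nY n.+1 => (Ncount pi l t < K)%N) <= e.
Proof.
move=> he.
rewrite /Pr big_mkcond /=.
rewrite (eq_bigr (fun t : traj nX nY n.+1 => Defs.pathP O T pi mu t * (Ncount pi l t < K)%:R)); last first.
  by move=> t _; case: ifP => _; rewrite ?mulr1 ?mulr0.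
rewrite big_tupleS.
apply: (@le_trans _ _ (\sum_(q : P) mu q.1 * O q.2 q.1 * e)); last first.
  by rewrite -mulr_suml sum_muO mul1r.
apply: ler_sum => q _.
have -> : \sum_(t : n.-tuple P) Defs.pathP O T pi mu [tuple of q :: t] *
     (Ncount pi l [tuple of q :: t] < K)%:R =
   mu q.1 * O q.2 q.1 * F O T pi l n (K - hit pi l q) q.
  rewrite /F mulr_sumr; apply: eq_bigr => t _ /=.
  by rewrite /Ncount /= ltn_subRL mulrA.
apply: ler_wpM2l; first by rewrite mulr_ge0 ?(O_ge0 hO) //; case: hmu.
apply: le_trans (he q).
by apply: (F_monoK pi l hT hO); rewrite leq_subr.
Qed.

End Prob.

Lemma colnorm_ge (R : realType) m (v : 'I_m -> R) j : `|v j| <= colnorm v.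
Proof.
rewrite /colnorm -sqrtr_sqr; apply: ler_wsqrtr.
rewrite (bigD1 j) //= lerDl; apply: sumr_ge0 => k _; exact: sqr_ge0.
Qed.

Lemma Vtilde_pos (R : realType) nX nY (Vh : 'M[R]_(nY, nX)) b j i :
  (0 < Vtilde Vh b j i) = (b <= Vh j i).
Proof. by rewrite /Vtilde mxE; case: ifP; rewrite ?ltr01 ?ltxx. Qed.

Lemma V2_pos_O (R : realType) nX nY nA (O : 'M[R]_(nY, nX)) pi rho (l : 'I_nA) j i :
  colstoch O -> 0 < V2 O pi rho l j i -> 0 < O j i.
Proof.
move=> hO hv; rewrite lt_def (O_ge0 hO) andbT; move: hv.
by rewrite /V2 mxE /joint; apply: contraTneq => ->; rewrite mulr0 mul0r mul0r ltxx.
Qed.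

Lemma est_pos (R : realType) m (v w : 'I_m -> R) b j :
  colnorm (fun j => v j - w j) < b -> b <= w j -> 0 < v j.
Proof.
move=> h1 h2; have := colnorm_ge (fun j => v j - w j) j => /= h3.
have h4 := ler_norm (v j - w j).
have : w j - v j <= `|v j - w j| by rewrite distrC ler_norm.
lra.
Qed.

Lemma est_equiv (R : realType) m (v w : 'I_m -> R) b j :
  colnorm (fun j => v j - w j) < b -> (0 < v j -> b <= v j / 2) ->
  (b <= w j) = (0 < v j).
Proof.
move=> h1 h2; apply/idP/idP; first exact: est_pos h1.
move=> hv; have h5 := h2 hv.
have := colnorm_ge (fun j => v j - w j) j => /= h3.
have : v j - w j <= `|v j - w j| by rewrite ler_norm.
lra.
Qed.

Lemma cluster_eq nX nY nA (Xs : 'I_nA -> {set 'I_nX}) (f g : 'I_nA -> 'I_nX -> {set 'I_nY}) :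
  (forall l i, i \in Xs l -> f l i = g l i) -> cluster_space Xs f = cluster_space Xs g.
Proof.
move=> h; rewrite /cluster_space.
have -> : [set f l i | l in 'I_nA, i in Xs l] = [set g l i | l in 'I_nA, i in Xs l].
  apply/setP => C; apply/imset2P/imset2P => -[l i hl hi ->]; exists l i => //.
    by rewrite h.
  by rewrite h.
congr (_ :|: [set [set j] | j in ~: _]).
apply: eq_bigr => l _; apply: eq_bigr => i hi; exact: h.
Qed.

Lemma BO_small (R : realType) (C2 : R) nY delta v : 0 < C2 -> 0 < v ->
  exists n0, forall n, (n0 <= n)%N -> BO C2 nY delta n <= v.
Proof.
move=> hC hv; rewrite /BO.
set L := ln _.
set d := v / C2.
have d0 : 0 < d by rewrite divr_gt0.
have dd0 : 0 < d ^+ 2 by rewrite exprn_gt0.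
have hx : 0 <= `|L| / d ^+ 2 by rewrite divr_ge0 // ltW.
exists (Num.Def.archi_bound (`|L| / d ^+ 2)).+1 => n hn.
have hb := archi_boundP hx.
have hn' : (Num.Def.archi_bound (`|L| / d ^+ 2))%:R < n%:R :> R.
  by rewrite ltr_nat.
have n0 : 0 < n%:R :> R by rewrite ltr0n; apply: leq_trans hn.
have hsq : Num.sqrt (L / n%:R) <= d.
  case: (boolP (L <= 0)) => hL; last rewrite -ltNge in hL.
    rewrite ler0_sqrtr; first exact: ltW.
    by apply: mulr_le0_ge0 => //; rewrite invr_ge0 ltW.
  rewrite -(@ger0_norm _ d); last exact: ltW.
  rewrite -sqrtr_sqr; apply: ler_wsqrtr.
  rewrite ler_pdivrMr //.
  have : `|L| < n%:R * d ^+ 2.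
    by rewrite -ltr_pdivrMr //; apply: lt_trans hb hn'.
  rewrite gtr0_norm // => h; rewrite mulrC; exact: ltW.
have -> : v = C2 * d by rewrite /d mulrC divfK ?gt_eqF.
by rewrite ler_pM2l.
Qed.

Lemma omega_pos (R : realType) nX nY nA (O : 'M[R]_(nY, nX)) pi rho (l : 'I_nA) i :
  colstoch O -> 0 < omega O pi rho l i -> exists j, 0 < O j i /\ pi j = l.
Proof.
move=> hO; rewrite /omega.
case: (pickP (fun j => (O j i != 0) && (pi j == l))) => [j /andP [h1 /eqP h2] _ | hn].
  by exists j; split => //; rewrite lt_def h1 (O_ge0 hO).
rewrite big1 ?mul0r ?ltxx // => j _; rewrite /joint.
by have := hn j; case: (O j i =P 0) => [->|_]; [rewrite mulr0 mul0r | case: (pi j == l) => // _; rewrite mulr0].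
Qed.

Unset Implicit Arguments. Set Strict Implicit.

Theorem corollary4 (R : realType) (nX nY nA : nat)
  (T : 'I_nA -> 'M[R]_nX) (O : 'M[R]_(nY, nX)) (r : 'I_nX -> 'I_nA -> R)
  (pi : 'I_nY -> 'I_nA) (rho mu : 'I_nX -> R) (C2 : R) (thr : R -> nat)
  (Vhat : forall N : nat, traj nX nY N -> 'I_nA -> 'M[R]_(nY, nX))
  (hXY : (nX <= nY)%N)
  (hT : forall l, colstoch (T l))
  (hO : colstoch O)
  (hOu : forall j, exists! i, 0 < O j i)
  (hr : forall i l, 0 <= r i l <= 1)
  (hA1 : forall p : 'I_nY -> 'I_nA, ergodic_chain (induced_chain O T p))
  (hA2 : forall l, \rank (T l) = nX)
  (hrho : stationary (induced_chain O T pi) rho)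
  (hmu : distribution mu)
  (hC2 : 0 < C2)
  (hest : forall delta : R, 0 < delta < 1 -> forall N : nat,
     1 - delta <= Pr O T pi mu (fun tau : traj nX nY N =>
       [forall l, (thr delta < Ncount pi l tau)%N ==>
          [forall i in Xpi O pi rho l,
             colnorm (fun j => V2 O pi rho l j i - Vhat N tau l j i)
             < BO C2 nY delta (Ncount pi l tau)]])) :
  (forall delta : R, 0 < delta < 1 -> forall N : nat,
     1 - delta <= Pr O T pi mu (fun tau : traj nX nY N =>
       [forall l, (Xpi O pi rho l != set0) ==> (thr delta < Ncount pi l tau)%N]
       ==> consistent O (Shat (Xpi O pi rho) (Vhat N tau)
                           (fun l => BO C2 nY delta (Ncount pi l tau)))))
  /\
  (forall delta : R, 0 < delta < 1 -> forall eps : R, 0 < eps ->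
     exists N0 : nat, forall N : nat, (N0 <= N)%N ->
       1 - delta - eps <= Pr O T pi mu (fun tau : traj nX nY N =>
         Shat (Xpi O pi rho) (Vhat N tau)
              (fun l => BO C2 nY delta (Ncount pi l tau))
         == Slim (Xpi O pi rho) (V2 O pi rho))).
Proof.
split.
  move=> delta hd N; apply: le_trans (hest delta hd N) _.
  apply: (Pr_mono pi hT hO hmu) => tau hE; apply/implyP => hpre.
  apply/forallP => C; apply/implyP => hC; apply/forallP => j; apply/implyP => hj;
    apply/forallP => j'; apply/implyP => hj'.
  rewrite /Shat /cluster_space in_setU in hC.
  case/orP: hC => [/imset2P [l i _ hi hCe] | /imsetP [j0 _ hCe]]; subst C.
    have hthr : (thr delta < Ncount pi l tau)%N.
      apply: (implyP (forallP hpre l)).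
      by apply/set0Pn; exists i.
    have := implyP (forallP hE l) hthr => /forallP /(_ i) /implyP /(_ hi) hc.
    apply/existsP; exists i; rewrite /Ycl !inE.
    move: hj hj'; rewrite !inE !Vtilde_pos => hj hj'.
    by apply/andP; split; apply: (V2_pos_O (pi:=pi) (rho:=rho) (l:=l) hO); exact: (est_pos hc).
  move: hj hj'; rewrite !inE => /eqP -> /eqP ->.
  have [i [hi _]] := hOu j0.
  by apply/existsP; exists i; rewrite /Ycl !inE hi.
move=> delta hd eps heps.
have [K1 hK1] : exists K1, forall (t : 'I_nA * 'I_nX * 'I_nY) n, (K1 <= n)%N ->
    0 < V2 O pi rho t.1.1 t.2 t.1.2 -> BO C2 nY delta n <= V2 O pi rho t.1.1 t.2 t.1.2 / 2.
  apply: fin_max => t; case: (boolP (0 < V2 O pi rho t.1.1 t.2 t.1.2)) => hv.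
    have hv2 : 0 < V2 O pi rho t.1.1 t.2 t.1.2 / 2 by rewrite divr_gt0.
    have [n0 hn0] := BO_small nY delta hC2 hv2.
    by exists n0 => n hn _; exact: hn0.
  by exists 0%N.
pose K0 := maxn K1 (thr delta).+1.
have hK0 : forall n, (K0 <= n)%N -> (thr delta < n)%N /\ (forall l i j, 0 < V2 O pi rho l j i -> BO C2 nY delta n <= V2 O pi rho l j i / 2).
  move=> n hn; split; first by apply: leq_trans hn; rewrite leq_maxr.
  move=> l i j hv; move: (hK1 (l, i, j) n) => /= h; apply: h => //.
  by apply: leq_trans hn; rewrite leq_maxl.
pose e := eps / (nA%:R + 1).
have e0 : 0 < e by rewrite divr_gt0 // ltr_pwDr // ler0n.
have [N0 hN0] : exists N0, forall l N, (N0 <= N)%N ->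
    Pr O T pi mu (fun tau : traj nX nY N => (Xpi O pi rho l != set0) && (Ncount pi l tau < K0)%N) <= e.
  apply: fin_max => l.
  case: (boolP (Xpi O pi rho l != set0)) => hact; last first.
    by exists 0%N => N _; rewrite /Pr big_pred0 ?ltW // => t.
  have [i0 hi0] := set0Pn _ hact.
  have [j0 [hj0 hpj]] : exists j0, 0 < O j0 i0 /\ pi j0 = l.
    by apply: (omega_pos (rho := rho) hO); rewrite /Xpi inE in hi0.
  have hh : hit pi l (i0, j0) by rewrite /hit /= hpj.
  have [M [h [h0 h1 hH]]] := H_unif hT hO (proj1 (hA1 pi)) hh hj0.
  have [n0 hn0] := conv hT hO h0 h1 hH K0 e0.
  exists n0.+1 => N; case: N => [//|n] hn.
  apply: le_trans (Pr_count hT hO hmu (hn0 n hn)).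
  by apply: (Pr_mono pi hT hO hmu) => t /andP [_ ->].
exists N0 => N hN.
pose Est := fun tau : traj nX nY N => [forall l, (thr delta < Ncount pi l tau)%N ==>
          [forall i in Xpi O pi rho l,
             colnorm (fun j => V2 O pi rho l j i - Vhat N tau l j i)
             < BO C2 nY delta (Ncount pi l tau)]].
pose Cnt := fun tau : traj nX nY N =>
  [forall l, (Xpi O pi rho l != set0) ==> (K0 <= Ncount pi l tau)%N].
have h1 : 1 - delta <= Pr O T pi mu Est := hest delta hd N.
have h2 := Pr_and pi hT hO hmu Est Cnt.
have h3 : Pr O T pi mu (fun t => ~~ Cnt t) <= eps.
  apply: le_trans (Pr_mono pi hT hO hmu (E2 := fun t : traj nX nY N =>
     [exists l, (Xpi O pi rho l != set0) && (Ncount pi l t < K0)%N]) _) _.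
    move=> t; rewrite /Cnt negb_forall => /existsP [l hl]; apply/existsP; exists l.
    by rewrite negb_imply -ltnNge in hl.
  apply: le_trans (Pr_union pi hT hO hmu _) _.
  apply: le_trans (_ : \sum_(l : 'I_nA) e <= _).
    by apply: ler_sum => l _; exact: hN0.
  rewrite sumr_const card_ord -mulr_natl /e.
  have hn : 0 <= nA%:R :> R by rewrite ler0n.
  have -> : nA%:R * (eps / (nA%:R + 1)) = eps * (nA%:R / (nA%:R + 1)) by rewrite mulrCA mulrA.
  apply: ler_piMr; first exact: ltW.
  by rewrite ler_pdivrMr ?mul1r ?lerDl // ltr_pwDr // ler0n.
have h4 : Pr O T pi mu (fun t => Est t && Cnt t) <= Pr O T pi mu (fun tau : traj nX nY N =>
         Shat (Xpi O pi rho) (Vhat N tau)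
              (fun l => BO C2 nY delta (Ncount pi l tau))
         == Slim (Xpi O pi rho) (V2 O pi rho)).
  apply: (Pr_mono pi hT hO hmu) => tau /andP [hE hC]; apply/eqP; apply: cluster_eq => l i hi.
  have hact : Xpi O pi rho l != set0 by apply/set0Pn; exists i.
  have hK := implyP (forallP hC l) hact.
  have [hthr hBO] := hK0 _ hK.
  have := implyP (forallP hE l) hthr => /forallP /(_ i) /implyP /(_ hi) hc.
  apply/setP => j; rewrite !inE Vtilde_pos.
  apply: (est_equiv (v := fun j => V2 O pi rho l j i) (w := fun j => Vhat N tau l j i) hc).
  exact: hBO.
lra.
Qed.
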